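(* Let $R$ be a ring, let $A$ be an index set with $|A|>\max(2^{|R|},2^{\aleph_0})$, and let $(M_\alpha)_{\alpha\in A}$ be a family of left $R$-modules none of which is algebraically compact. Then $$\prod_{\alpha\in A}M_\alpha\Big/\bigoplus_{\alpha\in A}M_\alpha$$ is not algebraically compact.
   Context: A left $R$-module $M$ is algebraically compact if every system of linear equations $\sum_{j\in J} r_{ij}x_j=m_i$ ($i\in I$, $r_{ij}\in R$, each row having almost all $r_{ij}=0$, $m_i\in M$, $I,J$ arbitrary sets) whose finite subsystems are all solvable in $M$ is itself solvable in $M$ (equivalently, $M$ is pure injective). *)

(* Defs.v *)
From HB Require Import structures.
From mathcomp Require Import all_boot all_order all_algebra.
From mathcomp Require Import boolp classical_sets cardinality fsbigop.
Set Implicit Arguments. Unset Strict Implicit. Unset Printing Implicit Defensive.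
Import GRing.Theory.
Local Open Scope ring_scope.
Local Open Scope classical_set_scope.

Definition choiced (J : Type) : Type := J.
HB.instance Definition _ (J : Type) := gen_eqMixin (choiced J).
HB.instance Definition _ (J : Type) := gen_choiceMixin (choiced J).

Section LinearSystems.
Variables (R : pzRingType) (V : lmodType R).

Definition rows_finite (I J : Type) (r : I -> J -> R) : Prop :=
  forall i, finite_set [set j | r i j != 0].

Definition row_value (J : Type) (ri : J -> R) (x : J -> V) : V :=
  \sum_(j \in [set: choiced J]) (ri j *: x j).

Definition alg_compact : Prop :=
  forall (I J : Type) (r : I -> J -> R) (m : I -> V),
    rows_finite r ->
    (forall F : set I, finite_set F ->
       exists x : J -> V, forall i, F i -> row_value (r i) x = m i) ->
    exists x : J -> V, forall i, row_value (r i) x = m i.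

(* Elements of V/P are written as classes of elements of V, and an
   equation  sum_j r_ij [x_j] = [m_i]  holds in V/P iff
   sum_j r_ij x_j - m_i lies in P. *)
Definition alg_compact_quot (P : set V) : Prop :=
  forall (I J : Type) (r : I -> J -> R) (m : I -> V),
    rows_finite r ->
    (forall F : set I, finite_set F ->
       exists x : J -> V, forall i, F i -> P (row_value (r i) x - m i)) ->
    exists x : J -> V, forall i, P (row_value (r i) x - m i).

End LinearSystems.

Section Product.
Variables (R : pzRingType) (A : Type) (M : A -> lmodType R).

Definition dprod := forall a, M a.

HB.instance Definition _ := Choice.copy dprod (forall a, M a).

Definition dprod_zero : dprod := fun a => 0.
Definition dprod_add (x y : dprod) : dprod := fun a => x a + y a.
Definition dprod_opp (x : dprod) : dprod := fun a => - x a.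
Definition dprod_scale (k : R) (x : dprod) : dprod := fun a => k *: x a.

Lemma dprod_addA : associative dprod_add.
Proof. by move=> x y z; apply: functional_extensionality_dep => a; rewrite /dprod_add addrA. Qed.
Lemma dprod_addC : commutative dprod_add.
Proof. by move=> x y; apply: functional_extensionality_dep => a; rewrite /dprod_add addrC. Qed.
Lemma dprod_add0 : left_id dprod_zero dprod_add.
Proof. by move=> x; apply: functional_extensionality_dep => a; rewrite /dprod_add add0r. Qed.
Lemma dprod_addN : left_inverse dprod_zero dprod_opp dprod_add.
Proof. by move=> x; apply: functional_extensionality_dep => a; rewrite /dprod_add /dprod_opp addNr. Qed.

HB.instance Definition _ :=
  GRing.isZmodule.Build dprod dprod_addA dprod_addC dprod_add0 dprod_addN.

Lemma dprod_scaleA k l (x : dprod) :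
  dprod_scale k (dprod_scale l x) = dprod_scale (k * l) x.
Proof. by apply: functional_extensionality_dep => a; rewrite /dprod_scale scalerA. Qed.
Lemma dprod_scale1 : left_id 1 dprod_scale.
Proof. by move=> x; apply: functional_extensionality_dep => a; rewrite /dprod_scale scale1r. Qed.
Lemma dprod_scaleDr : right_distributive dprod_scale +%R.
Proof. by move=> k x y; apply: functional_extensionality_dep => a; rewrite /dprod_scale scalerDr. Qed.
Lemma dprod_scaleDl (x : dprod) :
  {morph dprod_scale^~ x : k l / k + l}.
Proof. by move=> k l; apply: functional_extensionality_dep => a; rewrite /dprod_scale scalerDl. Qed.

HB.instance Definition _ :=
  GRing.Zmodule_isLmodule.Build R dprod dprod_scaleA dprod_scale1
    dprod_scaleDr dprod_scaleDl.

Definition dsum : set dprod :=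
  [set x | finite_set [set a | x a != 0]].

End Product.

Definition card_lt (T U : Type) (X : set T) (Y : set U) : Prop :=
  (X #<= Y)%card /\ ~ (Y #<= X)%card.

(* Main.v *)
Require Import Defs.
From HB Require Import structures.
From mathcomp Require Import all_boot all_order all_algebra.
From mathcomp Require Import boolp classical_sets cardinality fsbigop.
From mathcomp Require Import functions finmap.

Module Part1.
Set Implicit Arguments. Unset Strict Implicit. Unset Printing Implicit Defensive.
Local Open Scope classical_set_scope.

Definition pick {T} (t0 : T) (P : T -> Prop) : T :=
  match pselect (exists x, P x) with
  | left h => proj1_sig (cid h)
  | right _ => t0 end.

Lemma pickP T (t0 : T) (P : T -> Prop) : (exists x, P x) -> P (pick t0 P).
Proof. by rewrite /pick; case: pselect => // h _; exact: (proj2_sig (cid h)). Qed.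

Definition injon {T U} (X : set T) (f : T -> U) :=
  forall x y, X x -> X y -> f x = f y -> x = y.

Lemma total_pair T (F : set (set T)) : total_on F subset ->
  forall G1 G2, F G1 -> F G2 -> exists H, [/\ F H, G1 `<=` H & G2 `<=` H].
Proof.
by move=> tot G1 G2 F1 F2; case: (tot _ _ F1 F2) => s; [exists G2|exists G1]; split.
Qed.

Lemma compar T U (t0 : T) (u0 : U) (X : set T) (Z : set U) :
  (exists f : T -> U, injon X f /\ (forall x, X x -> Z (f x))) \/
  (exists g : U -> T, injon Z g /\ (forall z, Z z -> X (g z))).
Proof.
pose P := [set G : set (T * U) | [/\ (forall p, G p -> X p.1 /\ Z p.2),
   (forall a b b', G (a, b) -> G (a, b') -> b = b') &
   (forall a a' b, G (a, b) -> G (a', b) -> a = a')]].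
have [A [[AXZ Afun Ainj] Amax]] : exists A, P A /\ forall B, A `<` B -> ~ P B.
  apply: Zorn_bigcup => F FP tot; split.
  - by move=> p [G FG Gp]; have [h _ _] := FP _ FG; exact: h.
  - move=> a b b' [G1 F1 G1p] [G2 F2 G2p].
    have [H [FH s1 s2]] := total_pair tot F1 F2.
    by have [_ h _] := FP _ FH; apply: h (s1 _ G1p) (s2 _ G2p).
  - move=> a a' b [G1 F1 G1p] [G2 F2 G2p].
    have [H [FH s1 s2]] := total_pair tot F1 F2.
    by have [_ _ h] := FP _ FH; apply: h (s1 _ G1p) (s2 _ G2p).
case: (pselect (forall x, X x -> exists z, A (x, z))) => [hX|nX].
  left; exists (fun x => pick u0 (fun z => A (x, z))); split.
    move=> x y Xx Xy e; apply: (Ainj _ _ (pick u0 (fun z => A (x, z)))).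
      exact: pickP (hX _ Xx).
    by rewrite e; exact: pickP (hX _ Xy).
  by move=> x Xx; exact: (AXZ _ (pickP u0 (hX _ Xx))).2.
case: (pselect (forall z, Z z -> exists x, A (x, z))) => [hZ|nZ].
  right; exists (fun z => pick t0 (fun x => A (x, z))); split.
    move=> x y Xx Xy e; apply: (Afun (pick t0 (fun a => A (a, x)))).
      exact: pickP (hZ _ Xx).
    by rewrite e; exact: pickP (hZ _ Xy).
  by move=> x Xx; exact: (AXZ _ (pickP t0 (hZ _ Xx))).1.
exfalso.
have [x [Xx Nx]] : exists x, X x /\ forall z, ~ A (x, z).
  apply: contra_notP nX => h y Xy; apply: contra_notP h => h.
  by exists y; split => // z Az; apply: h; exists z.
have [z [Zz Nz]] : exists z, Z z /\ forall x, ~ A (x, z).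
  apply: contra_notP nZ => h y Zy; apply: contra_notP h => h.
  by exists y; split => // w Aw; apply: h; exists w.
apply: (Amax (A `|` [set (x, z)])).
  split; first by move=> p Ap; left.
  by move=> /(_ (x, z) (or_intror erefl)) /Nx.
split.
- by move=> p [/AXZ //|->].
- move=> a b b' [Ab|[e1 e2]] [Ab'|[e3 e4]]; subst.
  + exact: Afun Ab Ab'.
  + by case: (Nx _ Ab).
  + by case: (Nx _ Ab').
  + by [].
- move=> a a' b [Ab|[e1 e2]] [Ab'|[e3 e4]]; subst.
  + exact: Ainj Ab Ab'.
  + by case: (Nz _ Ab).
  + by case: (Nz _ Ab').
  + by [].
Qed.

Section Hessenberg.
Variables (T : Type) (e : nat -> T).
Hypothesis e_inj : injective e.

Let dm (G : set ((T * T) * T)) : set T := [set a | exists x, G ((a, a), x)].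
Let good (G : set ((T * T) * T)) :=
  [/\ range e `<=` dm G,
      (forall p x, G (p, x) -> [/\ dm G p.1, dm G p.2 & dm G x]),
      (forall a b, dm G a -> dm G b -> exists x, G ((a, b), x)),
      (forall p x y, G (p, x) -> G (p, y) -> x = y) &
      (forall p q x, G (p, x) -> G (q, x) -> p = q)].

Let dm_sub G H : G `<=` H -> dm G `<=` dm H.
Proof. by move=> GH a [x Gx]; exists x; apply: GH. Qed.

Let G0 : set ((T * T) * T) :=
  [set q | exists i j, q = ((e i, e j), e (choice.pickle (i, j)))].

Let dmG0 a : dm G0 a <-> exists i, a = e i.
Proof.
split; first by move=> [x [i [j [-> _ _]]]]; exists i.
by move=> [i ->]; exists (e (choice.pickle (i, i))); exists i, i.
Qed.

Let goodG0 : good G0.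
Proof.
split.
- by move=> _ [i _ <-]; apply/dmG0; exists i.
- move=> p x [i [j [-> ->]]] /=.
  by split; apply/dmG0; [exists i|exists j|exists (choice.pickle (i, j))].
- move=> a b /dmG0 [i ->] /dmG0 [j ->].
  by exists (e (choice.pickle (i, j))); exists i, j.
- move=> p x y [i [j [-> ->]]] [i' [j' [[/e_inj -> /e_inj ->] ->]]].
  by [].
- move=> p q x [i [j [-> ->]]] [i' [j' [-> /e_inj]]].
  by move=> /(pcan_inj choice.pickleK) [-> ->].
Qed.

Let P (G : set ((T * T) * T)) := G = set0 \/ good G.

Let chainP : forall F : set (set ((T * T) * T)), F `<=` P -> total_on F subset ->
  P (\bigcup_(G in F) G).
Proof.
move=> F FP tot.
case: (pselect (\bigcup_(G in F) G = set0)) => [->|ne]; [by left|right].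
have gd G q : F G -> G q -> good G.
  by move=> FG Gq; case: (FP _ FG) => // G0e; rewrite G0e in Gq.
have /set0P [q [G1 FG1 G1q]] : (\bigcup_(G in F) G) != set0 by apply/eqP.
have dmU a : dm (\bigcup_(G in F) G) a -> exists2 G, F G & G ((a, a), pick a (fun x => G ((a, a), x))).
  move=> [x [G FG Gx]]; exists G => //.
  exact: (@pickP _ a (fun z => G ((a, a), z)) (ex_intro _ x Gx)).
have [r1 r2 r3 r4 r5] := gd _ _ FG1 G1q.
split.
- move=> a /r1 Xa; apply: (@dm_sub G1 (\bigcup_(G in F) G)) Xa.
  by move=> z Gz; exists G1.
- move=> p x [G FG Gp]; have [_ h _ _ _] := gd _ _ FG Gp.
  have [h1 h2 h3] := h _ _ Gp.
  have sG : G `<=` \bigcup_(G in F) G by move=> z Gz; exists G.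
  by split; apply: (@dm_sub G).
- move=> a b /dmU [Ga FGa Gaa] /dmU [Gb FGb Gbb].
  have [H [FH s1 s2]] := total_pair tot FGa FGb.
  have [_ _ h _ _] := gd _ _ FH (s1 _ Gaa).
  have [x Hx] := h a b (dm_sub s1 (ex_intro _ _ Gaa)) (dm_sub s2 (ex_intro _ _ Gbb)).
  by exists x; exists H.
- move=> p x y [G1' F1 G1x] [G2' F2 G2y].
  have [H [FH s1 s2]] := total_pair tot F1 F2.
  have [_ _ _ h _] := gd _ _ FH (s1 _ G1x).
  exact: h (s1 _ G1x) (s2 _ G2y).
- move=> p p' x [G1' F1 G1x] [G2' F2 G2y].
  have [H [FH s1 s2]] := total_pair tot F1 F2.
  have [_ _ _ _ h] := gd _ _ FH (s1 _ G1x).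
  exact: h (s1 _ G1x) (s2 _ G2y).
Qed.

Lemma hessenberg_aux : exists h : T * T -> T, injective h.
Proof.
have [A [PA Amax]] := Zorn_bigcup chainP.
have {PA} [A0|gA] := PA.
  exfalso; apply: (Amax G0); last by right.
  rewrite A0; split => // /(_ ((e 0, e 0), e (choice.pickle (0, 0)))) h.
  by apply: h; exists 0, 0.
have [r1 r2 r3 r4 r5] := gA.
pose X := dm A.
pose f (p : T * T) := pick (e 0) (fun x => A (p, x)).
have fA a b : X a -> X b -> A ((a, b), f (a, b)).
  by move=> Xa Xb; exact: (@pickP _ (e 0) (fun x => A ((a, b), x)) (r3 a b Xa Xb)).
have fX a b : X a -> X b -> X (f (a, b)).
  by move=> Xa Xb; have [] := r2 _ _ (fA _ _ Xa Xb).
have finj a b a' b' : X a -> X b -> X a' -> X b' -> f (a, b) = f (a', b') ->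
    a = a' /\ b = b'.
  move=> Xa Xb Xa' Xb' eq.
  have := r5 _ _ _ (fA _ _ Xa Xb); rewrite eq => /(_ _ (fA _ _ Xa' Xb')).
  by case.
have Xe i : X (e i) by apply: r1; exists i.
pose t1 := e 0; pose t2 := e 1; pose t3 := e 2.
have t12 : t1 <> t2 by move/e_inj.
have t13 : t1 <> t3 by move/e_inj.
have t23 : t2 <> t3 by move/e_inj.
have noext : ~ exists k : T -> T, injon X k /\ forall a, X a -> ~ X (k a).
  move=> [k [kinj kX]].
  pose Y := [set y | exists2 a, X a & y = k a].
  have XY y : X y -> ~ Y y by move=> Xy [a Xa yE]; apply: (kX a Xa); rewrite -yE.
  pose kinv y := pick (e 0) (fun a => X a /\ y = k a).
  have kinvP y : Y y -> X (kinv y) /\ y = k (kinv y).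
    move=> [a Xa ->].
    exact: (@pickP _ (e 0) (fun a' => X a' /\ k a = k a') (ex_intro _ a (conj Xa erefl))).
  pose pre a := if `[< X a >] then a else kinv a.
  have preX a : X a \/ Y a -> X (pre a).
    rewrite /pre; case: (pselect (X a)) => Xa; first by rewrite asboolT.
    by rewrite asboolF // => -[//|/kinvP[]].
  have preinj a a' : X a \/ Y a -> X a' \/ Y a' -> (X a <-> X a') ->
      pre a = pre a' -> a = a'.
    rewrite /pre => Ha Ha' iff; case: (pselect (X a)) => Xa.
      by rewrite !asboolT //; apply/iff.
    have Xa' : ~ X a' by move/iff.
    rewrite !asboolF // => eq.
    have [_ ->] := kinvP a (if Ha is or_intror h then h else ltac:(by case: Ha)).
    have [_ ->] := kinvP a' (if Ha' is or_intror h then h else ltac:(by case: Ha')).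
    by rewrite eq.
  pose tag a b := if `[< X a >] then t1 else if `[< X b >] then t2 else t3.
  have tagX a b : X (tag a b).
    by rewrite /tag; case: ifP => _; [apply: Xe|case: ifP => _; apply: Xe].
  pose code a b := k (f (tag a b, f (pre a, pre b))).
  pose cond a b := [/\ X a \/ Y a, X b \/ Y b & ~ (X a /\ X b)].
  have codeX a b : cond a b -> X (f (tag a b, f (pre a, pre b))).
    by move=> [Ha Hb _]; apply: (fX) => //; apply: (fX); apply: (preX).
  have codeY a b : cond a b -> Y (code a b).
    by move=> c; exists (f (tag a b, f (pre a, pre b))) => //; apply: (codeX).
  pose B := A `|` [set q | exists a b, cond a b /\ q = ((a, b), code a b)].
  have dmB a : dm B a <-> X a \/ Y a.
    split.
      move=> [x [Ax|[a' [b' [[Ha _ _] E]]]]]; first by left; exists x.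
      by case: E => ->.
    move=> [Xa|Ya].
      by exists (f (a, a)); left; apply: (fA).
    exists (code a a); right; exists a, a; split => //.
    by split; [right|right|move=> [/XY]].
  apply: (Amax B).
    split; first by move=> q Aq; left.
    move=> BA.
    have Y1 : Y (k t1) by exists t1; [apply: (Xe)|].
    have c11 : cond (k t1) (k t1) by split; [right|right|move=> [/XY]].
    have /BA /r2 [/= /XY] // : B ((k t1, k t1), code (k t1) (k t1)).
    by right; exists (k t1), (k t1).
  right; split.
  - by move=> a /r1 Xa; apply/dmB; left.
  - move=> p x [Ap|[a [b [c [-> ->]]]]].
      by have [h1 h2 h3] := r2 _ _ Ap; split; apply/dmB; left.
    case: (c) => Ha Hb _; split; apply/dmB => //.
    by right; apply: (codeY).
  - move=> a b /dmB Ha /dmB Hb.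
    case: (pselect (X a /\ X b)) => [[Xa Xb]|nXX].
      by exists (f (a, b)); left; apply: (fA).
    by exists (code a b); right; exists a, b; split.
  - move=> p x y [Ap|[a [b [c [-> ->]]]]] [Ap'|[a' [b' [c' [pe ->]]]]].
    + exact: r4 Ap Ap'.
    + case: c' => _ _ []; move: pe Ap => -> /r2 [] //.
    + case: c => _ _ []; move: Ap' => /r2 [] //.
    + by case: pe => -> ->.
  - move=> p q x [Ap|[a [b [c [-> ->]]]]] [Ap'|[a' [b' [c' [-> xe]]]]].
    + exact: r5 Ap Ap'.
    + have [_ _ Xx] := r2 _ _ Ap; case: (XY _ Xx); rewrite xe; exact: (codeY _ _ c').
    + have [_ _ Xx] := r2 _ _ Ap'; case: (XY _ Xx); exact: (codeY _ _ c).
    + move: xe => /kinj => /(_ (codeX _ _ c) (codeX _ _ c')).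
      have [Ha Hb nab] := c; have [Ha' Hb' nab'] := c'.
      move=> /finj [] //; try apply: (tagX); try (apply: (fX); apply: (preX); done).
      move=> et /finj [] //; try (apply: (preX); done).
      move=> ea eb.
      move: et; rewrite /tag.
      case: (pselect (X a')) => Xa'; case: (pselect (X a)) => Xa;
        rewrite ?(asboolT Xa) ?(asboolF Xa) ?(asboolT Xa') ?(asboolF Xa') //;
        try (by move=> /esym);
        case: (pselect (X b')) => Xb'; case: (pselect (X b)) => Xb;
        rewrite ?(asboolT Xb) ?(asboolF Xb) ?(asboolT Xb') ?(asboolF Xb') //;
        try (by move=> /esym); move=> _;
        congr pair; apply: (preinj) => //; tauto.
have [[k [kinj kX]]|[g [ginj gX]]] := compar (e 0) (e 0) X (~` X).
  by case: noext; exists k.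
pose io a := if `[< X a >] then f (t1, a) else f (t2, g a).
have ioX a : X (io a).
  rewrite /io; case: (pselect (X a)) => Xa.
    by rewrite asboolT //; apply: (fX) => //; apply: (Xe).
  by rewrite asboolF //; apply: (fX); [apply: (Xe)|apply: (gX)].
have ioinj : injective io.
  move=> a a'; rewrite /io.
  case: (pselect (X a)) => Xa; case: (pselect (X a')) => Xa';
    rewrite ?(asboolT Xa) ?(asboolF Xa) ?(asboolT Xa') ?(asboolF Xa').
  - by move=> /(finj _ _ _ _ (Xe 0) Xa (Xe 0) Xa') [].
  - by move=> /(finj _ _ _ _ (Xe 0) Xa (Xe 1) (gX _ Xa')) [].
  - by move=> /(finj _ _ _ _ (Xe 1) (gX _ Xa) (Xe 0) Xa') [] /esym.
  - move=> /(finj _ _ _ _ (Xe 1) (gX _ Xa) (Xe 1) (gX _ Xa')) [_].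
    exact: ginj.
exists (fun p => f (io p.1, io p.2)) => -[a b] [a' b'] /=.
by move=> /(finj _ _ _ _ (ioX a) (ioX b) (ioX a') (ioX b')) [/ioinj -> /ioinj ->].
Qed.

End Hessenberg.

Lemma hessenberg T : ([set: nat] #<= [set: T])%card ->
  exists2 e : nat -> T, injective e & exists h : T * T -> T, injective h.
Proof.
move=> /card_leP [f].
pose e n := val (f (SigSub (@mem_set _ [set: nat] n I))).
have ei : injective e.
  move=> m n /val_inj /(@inj _ _ _ f) => /(_ (mem_set I) (mem_set I)) H.
  by move: (congr1 val H).
by exists e => //; apply: hessenberg_aux ei.
Qed.

Lemma seq_enc T (e : nat -> T) (h : T * T -> T) :
  injective e -> injective h -> exists enc : seq T -> T, injective enc.
Proof.
move=> ei hi.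
exists (fun s => h (e (size s), foldr (fun x acc => h (x, acc)) (e 0) s)).
move=> s s' /hi [/ei sz].
elim: s s' sz => [|x s IH] [|y s'] //= [sz] /hi [-> fe].
by rewrite (IH _ sz fe).
Qed.

Lemma inj_le T U (f : T -> U) : injective f -> ([set: T] #<= [set: U])%card.
Proof.
move=> fi.
have : $|{injfun [set: T] >-> [set: U]}|.
  by apply/injfunPex; exists f => // x y _ _; apply: fi.
by case=> h; exact: inj_card_le h.
Qed.

End Part1.
Import Part1.

Module Part2.
Set Implicit Arguments. Unset Strict Implicit. Unset Printing Implicit Defensive.
Import GRing.Theory.
Local Open Scope ring_scope.
Local Open Scope classical_set_scope.

Section Sys.
Variables (R : pzRingType) (V : lmodType R).

Definition Phi := seq (seq R).

Definition rowsum (l : seq R) (z : nat -> V) : V :=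
  \sum_(j < size l) l`_j *: z j.

Definition satf (v : V) (phi : Phi) (c : nat -> V) :=
  exists z : nat -> V, z 0%N = v /\ forall k, rowsum (nth [::] phi k) z = c k.

Lemma rowsum_lin l (z1 z2 z3 : nat -> V) :
  rowsum l (fun j => z1 j - z2 j + z3 j) = rowsum l z1 - rowsum l z2 + rowsum l z3.
Proof.
rewrite /rowsum -sumrB -big_split /=; apply: eq_bigr => j _.
by rewrite scalerDr scalerBr.
Qed.

Lemma satf_coset v u phi c c' :
  satf v phi c' -> satf u phi c' -> satf u phi c -> satf v phi c.
Proof.
move=> [z1 [z10 h1]] [z2 [z20 h2]] [z3 [z30 h3]].
exists (fun j => z1 j - z2 j + z3 j); split.
  by rewrite z10 z20 z30 subrK.
by move=> k; rewrite rowsum_lin h1 h2 h3 subrr add0r.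
Qed.

Lemma row_value_list (J : Type) (ri : J -> R) (x : J -> V) (s : seq (choiced J)) :
  uniq s -> (forall j, j \notin s -> ri j = 0) ->
  row_value ri x = \sum_(j <- s) ri j *: x j.
Proof.
move=> us hs; rewrite /row_value (fsbigE s) //.
  by apply: eq_bigl => j; rewrite in_setT.
by move=> j _ /hs ->; rewrite scale0r.
Qed.

Lemma row_value_dep (J : Type) (ri : J -> R) (x x' : J -> V) :
  (forall j, ri j != 0 -> x j = x' j) -> row_value ri x = row_value ri x'.
Proof.
move=> h; rewrite /row_value; apply: eq_fsbigr => j _.
by have [->|/h ->] := eqVneq (ri j) 0; rewrite ?scale0r.
Qed.

Lemma row_value_split (J : Type) (ri : J -> R) (x g : J -> V)
    (D : set (choiced J)) (js : seq (choiced J)) :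
  finite_set [set j : choiced J | ri j != 0] ->
  (forall j, D j -> x j = g j) -> uniq js -> (forall j, j \in js -> ~ D j) ->
  (forall j, ri j != 0 -> ~ D j -> j \in js) ->
  row_value ri x = \sum_(j \in D) ri j *: g j + \sum_(j <- js) ri j *: x j.
Proof.
move=> fin xg ujs jsD cov.
have finD : finite_set (D `&` [set j : choiced J | ri j != 0]) by apply: finite_setIr.
pose sD := fset_set (D `&` [set j : choiced J | ri j != 0]).
have insD (j : choiced J) : (j \in sD) = `[< D j /\ ri j != 0 >].
  rewrite /sD (in_fset_set finD); apply/idP/idP.
    by move=> /set_mem h; exact: asboolT h.
  by move=> /asboolP h; exact: mem_set h.
rewrite (row_value_list x (s := sD ++ js)); first last.
- move=> j; rewrite mem_cat negb_or insD => /andP [nD nJ].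
  apply/eqP; apply: contraNT nJ => rj; apply: cov => // Dj.
  by move: nD; rewrite asboolT.
- rewrite cat_uniq ujs andbT; apply/andP; split; first exact: fset_uniq.
  apply/hasPn => j /jsD nD; rewrite insD; apply/negP => /asboolP [].
  by [].
rewrite big_cat /=; congr (_ + _).
rewrite (fsbigE sD) //; first last.
- move=> j Dj; rewrite insD => nj.
  have -> : ri j = 0 by apply/eqP; apply: contraNT nj => rj; apply/asboolP.
  by rewrite scale0r.
- by move=> j /=; rewrite insD => /asboolP [].
rewrite big_seq_cond [RHS]big_seq_cond; apply: eq_big => j.
  rewrite insD; case: (boolP `[< _ >]) => //= /asboolP [Dj _].
  by apply/esym/mem_set.
by rewrite insD => /andP [/asboolP [Dj _] _]; rewrite xg.
Qed.

End Sys.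

Section OneVar.
Variables (R : pzRingType) (V : lmodType R).
Variables (I J : Type) (r : I -> J -> R) (m : I -> V).
Hypothesis rf : rows_finite r.
Hypothesis fs : forall F : set I, finite_set F ->
  exists x : J -> V, forall i, F i -> row_value (r i) x = m i.
Hypothesis ns : ~ exists x : J -> V, forall i, row_value (r i) x = m i.

Definition valid (D : set J) (g : J -> V) :=
  forall F : set I, finite_set F -> exists x : J -> V,
    (forall j, D j -> x j = g j) /\ forall i, F i -> row_value (r i) x = m i.

Definition condC (D : set J) (g : J -> V) (j0 : J) (F : set I) (v : V) :=
  exists x : J -> V, [/\ forall j, D j -> x j = g j, x j0 = v &
    forall i, F i -> row_value (r i) x = m i].

Let PT := {p : set J * (J -> V) | valid p.1 p.2}.
Let le (p q : PT) : bool := `[< (sval p).1 `<=` (sval q).1 /\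
   forall j, (sval p).1 j -> (sval p).2 j = (sval q).2 j >].

Let valid0 : valid set0 (fun=> 0).
Proof. by move=> F /fs [x hx]; exists x; split. Qed.

Let leP p q : le p q <-> (sval p).1 `<=` (sval q).1 /\
   forall j, (sval p).1 j -> (sval p).2 j = (sval q).2 j.
Proof. by split => [/asboolP|h]; [|apply/asboolP]. Qed.

Let maximal_exists : exists t : PT, premaximal (fun x y => le x y) t.
Proof.
apply: (ZL_preorder (exist _ (set0, fun=> 0) valid0)).
- by move=> t; apply/leP; split.
- move=> a b c /leP [s1 e1] /leP [s2 e2]; apply/leP; split.
    by move=> j /s1 /s2.
  by move=> j ja; rewrite e1 // e2 //; apply: s1.
move=> A tot.
case: (pselect (exists p, A p)) => [[p0 Ap0]|nA]; last first.
  by exists (exist _ (set0, fun=> 0) valid0) => s As; case: nA; exists s.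
pose D := [set j | exists2 p, A p & (sval p).1 j].
pose g j := pick 0 (fun y => exists2 p, A p & (sval p).1 j /\ y = (sval p).2 j).
have compat p q j : A p -> A q -> (sval p).1 j -> (sval q).1 j ->
    (sval p).2 j = (sval q).2 j.
  move=> Ap Aq pj qj; case: (tot _ _ Ap Aq) => /leP [_ h].
    exact: h.
  by rewrite h.
have gE p j : A p -> (sval p).1 j -> g j = (sval p).2 j.
  move=> Ap pj; rewrite /g.
  have [q Aq [qj ->]] := @pickP _ 0
    (fun y => exists2 p, A p & (sval p).1 j /\ y = (sval p).2 j)
    (ex_intro _ ((sval p).2 j) (ex_intro2 _ _ p Ap (conj pj erefl))).
  exact: compat.
have cover (s : seq (choiced J)) : (forall j, j \in s -> D j) ->
    exists2 p, A p & forall j, j \in s -> (sval p).1 j.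
  elim: s => [|j s IH] hs; first by exists p0.
  have [q Aq qj] := hs j (mem_head _ _).
  have [p Ap ps] := IH (fun j' js => hs j' (ltac:(by rewrite inE js orbT))).
  case: (tot _ _ Ap Aq) => /leP [sub _].
    exists q => // j'; rewrite inE => /orP [/eqP -> //|/ps]; exact: sub.
  exists p => // j'; rewrite inE => /orP [/eqP ->|/ps //]; exact: sub.
have vD : valid D g.
  move=> F finF.
  pose U := \bigcup_(i in F) [set j : choiced J | r i j != 0].
  have finU : finite_set U by apply: bigcup_finite => // i _; exact: rf.
  have finW : finite_set (U `&` D) by apply: finite_setIl.
  have [p Ap ps] := cover (fset_set (U `&` D)) (fun j js =>
    (proj2 (set_mem (eqbLR (in_fset_set finW j) js)))).
  have [x' [x'p x'F]] := (svalP p) F finF.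
  exists (fun j => if `[< D j >] then g j else x' j); split.
    by move=> j Dj; rewrite asboolT.
  move=> i Fi; rewrite -x'F //; apply: row_value_dep => j rj.
  case: (pselect (D j)) => Dj; last by rewrite asboolF.
  rewrite asboolT // x'p; last first.
    by apply: ps; rewrite (in_fset_set finW); apply: mem_set; split => //; exists i.
  apply: gE => //; apply: ps; rewrite (in_fset_set finW); apply: mem_set.
  by split => //; exists i.
exists (exist _ (D, g) vD) => s As; apply/leP; split.
  by move=> j sj; exists s.
by move=> j sj; rewrite /= (gE s).
Qed.

Lemma onevar_aux : exists (D : set J) (g : J -> V) (j0 : J),
  [/\ valid D g, ~ D j0 &
      ~ exists v, forall F, finite_set F -> condC D g j0 F v].
Proof.
have [[[D g] vD] tmax] := maximal_exists.
case: (pselect (forall j, D j)) => [allD|].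
  case: ns; exists g => i.
  have [x [xg xF]] := vD [set i] (finite_set1 i).
  have -> : g = x by apply: funext => j; rewrite xg.
  exact: xF.
move=> /existsNP [j0 nj0].
exists D, g, j0; split => // [[v hv]].
pose g' j := if `[< j = j0 >] then v else g j.
have vD' : valid (D `|` [set j0]) g'.
  move=> F finF; have [x [xg xj0 xF]] := hv F finF.
  exists x; split => // j [Dj|->].
    rewrite /g' asboolF ?xg // => ej; apply: nj0; rewrite -ej.
    by [].
  by rewrite /g' asboolT.
have le1 : le (exist _ (D, g) vD) (exist _ (D `|` [set j0], g') vD').
  apply/leP; split; first by move=> j Dj; left.
  move=> j /= Dj; rewrite /g' asboolF // => ej; apply: nj0; rewrite -ej.
  by [].
have /leP [/= sub _] := tmax _ le1.
by apply: nj0; apply: sub; right.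
Qed.

Lemma sum_js (j0 : J) (js : seq (choiced J)) (ri : J -> R) (x : J -> V)
    (z : nat -> V) :
  (forall l, (l < size js)%N -> z l = x (nth j0 js l)) ->
  rowsum (map ri js) z = \sum_(j <- js) ri j *: x j.
Proof.
move=> hz; rewrite /rowsum size_map (big_nth j0) big_mkord; apply: eq_bigr => l _.
by rewrite (nth_map j0) // (hz l (ltn_ord l)).
Qed.

Section Transl.
Variables (D : set J) (g : J -> V) (j0 : J).
Hypothesis nj0 : ~ D j0.

Let Dc : set (choiced J) := D.
Definition Flist (F : set I) : seq (choiced I) := fset_set (F : set (choiced I)).
Definition UF (F : set I) : set (choiced J) :=
  [set j | [/\ exists2 i, F i & r i j != 0, ~ D j & j <> j0]].
Definition jsF (F : set I) : seq (choiced J) := j0 :: fset_set (UF F).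
Definition phiF (F : set I) : Phi R :=
  [seq [seq r i j | j <- jsF F] | i <- Flist F].
Definition cF (F : set I) : nat -> V := fun k =>
  nth 0 [seq m i - \sum_(j \in Dc) r i j *: g j | i <- Flist F] k.

Variable F : set I.
Hypothesis finF : finite_set F.

Let finUF : finite_set (UF F).
Proof.
apply: (@sub_finite_set _ _ (\bigcup_(i in F) [set j : choiced J | r i j != 0])).
  by move=> j [[i Fi rij] _ _]; exists i.
by apply: bigcup_finite => // i _; exact: rf.
Qed.

Let inUF j : (j \in fset_set (UF F)) = `[< UF F j >].
Proof.
rewrite (in_fset_set finUF); apply/idP/idP.
  by move=> /set_mem h; exact: asboolT h.
by move=> /asboolP h; exact: mem_set h.
Qed.

Let inFl i : (i \in Flist F) = `[< F i >].
Proof.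
have finF' : @finite_set (choiced I) F := finF.
rewrite /Flist (in_fset_set finF'); apply/idP/idP.
  by move=> /set_mem h; exact: asboolT h.
by move=> /asboolP h; exact: mem_set h.
Qed.

Let js_uniq : uniq (jsF F).
Proof.
rewrite /jsF /= fset_uniq andbT inUF; apply/negP => /asboolP [_ _].
by [].
Qed.

Let jsD (j : choiced J) : j \in jsF F -> ~ D j.
Proof.
rewrite /jsF in_cons => /orP [/eqP -> //|]; rewrite inUF => /asboolP [].
by [].
Qed.

Let js_cov i (j : choiced J) : F i -> r i j != 0 -> ~ D j -> j \in jsF F.
Proof.
move=> Fi rij nDj; rewrite /jsF. rewrite in_cons; case: (eqVneq j j0) => //= nj.
by rewrite inUF; apply/asboolP; split => //; [exists i|move/eqP: nj].
Qed.

Let finsupp i : finite_set [set j : choiced J | r i j != 0].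
Proof. exact: rf. Qed.

Lemma translF v : satf v (phiF F) (cF F) <-> condC D g j0 F v.
Proof.
split.
  move=> [z [z0 hz]].
  pose x (j : choiced J) := if `[< D j >] then g j
    else if j \in jsF F then z (index j (jsF F)) else 0.
  have hx l : (l < size (jsF F))%N -> z l = x (nth j0 (jsF F) l).
    move=> ls; rewrite /x asboolF; last by apply: jsD; exact: mem_nth.
    by rewrite mem_nth // index_uniq.
  exists x; split.
  - by move=> j Dj; rewrite /x asboolT.
  - by rewrite /x asboolF // mem_head /jsF /= eqxx.
  move=> i Fi.
  have xg' : forall j, Dc j -> x j = g j by move=> j Dj; rewrite /x asboolT.
  rewrite (@row_value_split _ _ _ _ x g Dc (jsF F) (finsupp i) xg' js_uniq jsD
     (fun j => @js_cov i j Fi)).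
  have iF : (i : choiced I) \in Flist F by rewrite inFl asboolT.
  have := hz (index (i : choiced I) (Flist F)).
  rewrite /phiF /cF (nth_map (i : choiced I)) ?index_mem // (nth_map (i : choiced I)) ?index_mem //.
  rewrite nth_index // (sum_js _ hx) => ->.
  by rewrite addrC subrK.
move=> [x [xg xj0 xF]].
exists (fun l => x (nth j0 (jsF F) l)); split => // k.
have [ks|ks] := ltnP k (size (Flist F)); last first.
  rewrite /phiF /cF !nth_default ?size_map //.
  by rewrite /rowsum big_ord0.
move: ks; rewrite /phiF /cF.
case E: (Flist F) => [//|i0 s] ks.
rewrite -E (nth_map i0) ?E // (nth_map i0) ?E //.
have Fi : F (nth i0 (Flist F) k).
  by apply/asboolP; rewrite -inFl; rewrite E; apply: mem_nth.
rewrite -E.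
rewrite (@sum_js j0 (jsF F) _ x) // -(xF _ Fi).
rewrite (@row_value_split _ _ _ _ x g Dc (jsF F) (finsupp _) xg js_uniq jsD
     (fun j => @js_cov _ j Fi)).
by rewrite addrC addKr.
Qed.

End Transl.

End OneVar.


Section OneVarMain.
Variables (R : pzRingType) (V : lmodType R).

Definition fin_sat (S : set (Phi R)) (c : Phi R -> nat -> V) :=
  forall Psi : set (Phi R), finite_set Psi -> Psi `<=` S ->
    exists v, forall phi, Psi phi -> satf v phi (c phi).
Definition non_sat (S : set (Phi R)) (c : Phi R -> nat -> V) :=
  ~ exists v, forall phi, S phi -> satf v phi (c phi).

Lemma onevar : ~ alg_compact V -> exists S c, fin_sat S c /\ non_sat S c.
Proof.
move=> nac.
have [I [J [r [m [rf fs ns]]]]] : exists I J (r : I -> J -> R) (m : I -> V),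
    [/\ rows_finite r, (forall F : set I, finite_set F ->
       exists x : J -> V, forall i, F i -> row_value (r i) x = m i) &
     ~ exists x : J -> V, forall i, row_value (r i) x = m i].
  apply: contra_notP nac => h I J r m rf fs; apply: contra_notP h => ns.
  by exists I, J, r, m.
have [D [g [j0 [vD nj0 nsat]]]] := onevar_aux rf fs ns.
pose S := [set phi | exists F, finite_set F /\ phi = phiF r D j0 F].
pose Fof phi := pick set0 (fun F => finite_set F /\ phi = phiF r D j0 F).
have FofP phi : S phi -> finite_set (Fof phi) /\ phi = phiF r D j0 (Fof phi).
  by move=> [F hF]; exact: (@pickP _ set0 (fun F => finite_set F /\ phi = phiF r D j0 F) (ex_intro _ F hF)).
exists S, (fun phi => cF r m D g (Fof phi)); split.
  move=> Psi finPsi PsiS.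
  have finU : finite_set (\bigcup_(phi in Psi) Fof phi).
    by apply: bigcup_finite => // phi /PsiS /FofP [].
  have [x [xg xF]] := vD _ finU.
  exists (x j0) => phi Psi_phi.
  have [finF ephi] := FofP _ (PsiS _ Psi_phi).
  have := proj2 (translF m rf g nj0 finF (x j0)).
  rewrite -ephi; apply; exists x; split => // i Fi.
  by apply: xF; exists phi.
move=> [v hv]; apply: nsat; exists v => F finF.
have Sphi : S (phiF r D j0 F) by exists F.
have [finF1 e1] := FofP _ Sphi.
have finFF : finite_set (F `|` Fof (phiF r D j0 F)) by rewrite finite_setU.
have [x [xg xF]] := vD _ finFF.
apply/(translF m rf g nj0 finF).
apply: (@satf_coset _ _ _ (x j0) _ _ (cF r m D g (Fof (phiF r D j0 F)))).
- exact: hv.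
- rewrite {1}e1; apply/(translF m rf g nj0 finF1).
  by exists x; split => // i Fi; apply: xF; right.
- apply/(translF m rf g nj0 finF).
  by exists x; split => // i Fi; apply: xF; left.
Qed.

End OneVarMain.

End Part2.
Import Part2.

Module Part3.
Set Implicit Arguments. Unset Strict Implicit. Unset Printing Implicit Defensive.
Import GRing.Theory.
Local Open Scope ring_scope.
Local Open Scope classical_set_scope.

Section Glob.
Variable (R : pzRingType).

Definition JJ := option (Phi R * nat).

Definition rS (S : set (Phi R)) (i : Phi R * nat) (j : JJ) : R :=
  if `[< S i.1 >] then
    match j with
    | None => (nth [::] i.1 i.2)`_0
    | Some (psi, l) => if (psi == i.1) && (0 < l)%N then (nth [::] i.1 i.2)`_l else 0
    end
  else 0.

Definition zf {V : Type} (x : JJ -> V) (phi : Phi R) (l : nat) : V :=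
  if l == 0%N then x None else x (Some (phi, l)).

Definition fJ (phi : Phi R) (k : nat) : choiced JJ :=
  if k == 0%N then None else Some (phi, k).

Lemma fJ_inj phi : injective (fJ phi).
Proof.
move=> k k'; rewrite /fJ.
by case: eqP => [->|_]; case: eqP => [->|_] // [->].
Qed.

Definition sJ (i : Phi R * nat) : seq (choiced JJ) :=
  map (fJ i.1) (iota 0 (size (nth [::] i.1 i.2))).

Lemma sJ_uniq i : uniq (sJ i).
Proof. by rewrite map_inj_uniq ?iota_uniq //; apply: fJ_inj. Qed.

Lemma sJ_cover S i (j : choiced JJ) : j \notin sJ i -> rS S i j = 0.
Proof.
rewrite /rS; case: `[< _ >] => //.
set l := nth [::] i.1 i.2.
move=> nj.
case: j nj => [[psi k]|] nj.
  case: ifP => // /andP [/eqP epsi k0].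
  rewrite nth_default //; rewrite leqNgt; apply: contra nj => kl.
  apply/mapP; exists k; first by rewrite mem_iota.
  by rewrite /fJ; case: eqP => [k0'|_]; [move: k0; rewrite k0'|rewrite epsi].
rewrite nth_default //; rewrite leqNgt; apply: contra nj => kl.
by apply/mapP; exists 0%N; first by rewrite mem_iota.
Qed.

Lemma rS_finite S : rows_finite (rS S).
Proof.
move=> i; apply: (@sub_finite_set _ _ [set` sJ i]); last exact: finite_seq.
move=> j /= rj; apply: contraNT rj => /sJ_cover ->; exact: eqxx.
Qed.

Lemma row_value_rS (V : lmodType R) S i (x : JJ -> V) :
  row_value (rS S i) x =
  if `[< S i.1 >] then rowsum (nth [::] i.1 i.2) (zf x i.1) else 0.
Proof.
rewrite (row_value_list x (sJ_uniq i)); last by move=> j; apply: sJ_cover.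
rewrite /sJ big_map.
case: (pselect (S i.1)) => Si; last first.
  rewrite (asboolF Si) big1 // => k _; rewrite /rS (asboolF Si) scale0r //.
rewrite (asboolT Si) /rowsum -(big_mkord xpredT (fun k => (nth [::] i.1 i.2)`_k *: zf x i.1 k)).
rewrite /index_iota subn0; apply: eq_bigr => k _.
rewrite /rS (asboolT Si) /fJ /zf; case: eqP => [->|k0] //.
by rewrite eqxx /= lt0n; move/eqP: k0 => ->.
Qed.

Variables (A : Type) (M : A -> lmodType R).

Lemma dprod_sumE (X : Type) (s : seq X) (P : pred X) (F : X -> dprod M) a :
  (\sum_(k <- s | P k) F k) a = \sum_(k <- s | P k) F k a.
Proof.
by apply: (big_morph (fun y : dprod M => y a)).
Qed.

Lemma rowsum_dprod l (z : nat -> dprod M) a :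
  rowsum l z a = rowsum l (fun k => z k a).
Proof. by rewrite /rowsum dprod_sumE. Qed.

Lemma row_value_dprod S i (x : JJ -> dprod M) a :
  row_value (rS S i) x a = row_value (rS S i) (fun j => x j a).
Proof.
rewrite !row_value_rS; case: `[< _ >] => //.
rewrite rowsum_dprod; congr rowsum; apply: funext => l.
by rewrite /zf; case: eqP.
Qed.

End Glob.

Section Final.
Variables (R : pzRingType) (A : Type) (M : A -> lmodType R).
Variables (Sa : A -> set (Phi R)) (ca : forall a, Phi R -> nat -> M a).
Hypothesis okS : forall a, fin_sat (Sa a) (ca a) /\ non_sat (Sa a) (ca a).

Definition mS (S : set (Phi R)) (i : Phi R * nat) : dprod M :=
  fun a => if `[< Sa a = S >] && `[< S i.1 >] then ca a i.1 i.2 else 0.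

Lemma rowsum0 (V : lmodType R) l : rowsum l (fun _ => 0 : V) = 0.
Proof. by rewrite /rowsum big1 // => j _; rewrite scaler0. Qed.

Lemma sys_finsol S (F : set (Phi R * nat)) : finite_set F ->
  exists x : JJ R -> dprod M, forall i, F i -> @dsum R A M (row_value (rS S i) x - mS S i).
Proof.
move=> finF.
pose Psi := [set phi | S phi /\ exists k, F (phi, k)].
have finPsi : finite_set Psi.
  apply: (@sub_finite_set _ _ (fst @` F)); last exact: finite_image.
  by move=> phi [_ [k Fk]]; exists (phi, k).
pose va a := pick 0 (fun v : M a => forall phi, Psi phi -> satf v phi (ca a phi)).
pose za a phi := pick (fun=> 0) (fun z : nat -> M a => z 0%N = va a /\
   forall k, rowsum (nth [::] phi k) z = ca a phi k).
have vaP a : Sa a = S -> forall phi, Psi phi -> satf (va a) phi (ca a phi).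
  move=> eS.
  have := (okS a).1 Psi finPsi; rewrite eS => /(_ (fun phi h => proj1 h)) [v hv].
  exact: (@pickP _ 0 (fun v : M a => forall phi, Psi phi -> satf v phi (ca a phi))
     (ex_intro _ v hv)).
have zaP a phi : Sa a = S -> Psi phi -> za a phi 0%N = va a /\
   forall k, rowsum (nth [::] phi k) (za a phi) = ca a phi k.
  move=> eS Pphi; have [z hz] := vaP a eS phi Pphi.
  exact: (@pickP _ (fun=> 0) (fun z : nat -> M a => z 0%N = va a /\
   forall k, rowsum (nth [::] phi k) z = ca a phi k) (ex_intro _ z hz)).
pose x : JJ R -> dprod M := fun j a => if `[< Sa a = S >] then
          match j with None => va a | Some (phi, l) => za a phi l end
        else 0.
exists x => -[phi k] Fi.
suff h : forall a, (row_value (rS S (phi, k)) x - mS S (phi, k)) a = 0.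
  apply: (@sub_finite_set _ _ set0); last exact: finite_set0.
  by move=> a /=; rewrite h eqxx.
move=> a.
have -> : (row_value (rS S (phi, k)) x - mS S (phi, k)) a =
   row_value (rS S (phi, k)) x a - mS S (phi, k) a by [].
rewrite row_value_dprod row_value_rS /mS /=.
case: (pselect (Sa a = S)) => eS; last first.
  rewrite (asboolF eS) /=.
  have -> : zf (fun j => x j a) phi = fun _ => 0.
    by apply: funext => l; rewrite /zf /x (asboolF eS); case: eqP.
  by rewrite rowsum0; case: `[< _ >]; rewrite subr0.
rewrite (asboolT eS) /=.
case: (pselect (S phi)) => Sphi; last by rewrite (asboolF Sphi) subr0.
rewrite (asboolT Sphi).
have Pphi : Psi phi by split => //; exists k.
have [z0 zk] := zaP a phi eS Pphi.
have -> : zf (fun j => x j a) phi = za a phi.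
  apply: funext => l; rewrite /zf /x (asboolT eS).
  by case: eqP => [->|].
by rewrite zk subrr.
Qed.

Lemma sys_nonsol S (x : JJ R -> dprod M) a : Sa a = S ->
  ~ (forall i, (row_value (rS S i) x - mS S i) a = 0).
Proof.
move=> eS h; apply: (okS a).2; exists (x None a) => phi Sphi.
exists (zf (fun j => x j a) phi); split => // k.
have := h (phi, k).
have -> : (row_value (rS S (phi, k)) x - mS S (phi, k)) a =
   row_value (rS S (phi, k)) x a - mS S (phi, k) a by [].
rewrite row_value_dprod row_value_rS /mS /=.
have SP : S phi by rewrite -eS.
rewrite (asboolT SP) (asboolT eS) /=.
by move/eqP; rewrite subr_eq0 => /eqP.
Qed.

Lemma final_gen (T : Type) (iR : R -> T) : injective iR ->
  ([set: nat] #<= [set: T])%card -> ~ ([set: A] #<= [set: set T])%card ->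
  ~ alg_compact_quot (@dsum R A M).
Proof.
move=> iRi Tinf nle Q.
have sol S : exists x : JJ R -> dprod M,
    forall i, @dsum R A M (row_value (rS S i) x - mS S i).
  have := Q _ _ (rS S) (mS S) (rS_finite S) (@sys_finsol S).
  by move=> [x hx]; exists x.
pose xS S := pick (fun _ => 0) (fun x : JJ R -> dprod M =>
    forall i, @dsum R A M (row_value (rS S i) x - mS S i)).
have xSP S i : @dsum R A M (row_value (rS S i) (xS S) - mS S i).
  have [x hx] := sol S.
  exact: (@pickP _ (fun _ => 0) (fun x : JJ R -> dprod M =>
    forall i, @dsum R A M (row_value (rS S i) x - mS S i)) (ex_intro _ x hx)).
pose E S i := [set a | (row_value (rS S i) (xS S) - mS S i) a != 0].
have finE S i : finite_set (E S i) by exact: xSP.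
have cov a : exists i, E (Sa a) i a.
  apply: contrapT => nh; apply: (@sys_nonsol (Sa a) (xS (Sa a)) a erefl) => i.
  by apply: contra_notP nh => ne; exists i; apply/eqP.
pose ia a := pick ([::], 0%N) (fun i => E (Sa a) i a).
have iaP a : E (Sa a) (ia a) a.
  have [i hi] := cov a.
  exact: (@pickP _ ([::], 0%N) (fun i => E (Sa a) i a) (ex_intro _ i hi)).
pose fE S i := pick (fun _ => 0%N) (fun f : A -> nat => {in E S i &, injective f}).
have fEP S i : {in E S i &, injective (fE S i)}.
  have /countable_injP [f hf] := finite_set_countable (finE S i).
  exact: (@pickP _ (fun _ => 0%N) (fun f : A -> nat => {in E S i &, injective f})
    (ex_intro _ f hf)).
pose na a := fE (Sa a) (ia a) a.
have [e ei [h hi]] := hessenberg Tinf.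
have [encS encSi] := seq_enc ei hi.
pose encP (phi : Phi R) := encS (map (fun l => encS (map iR l)) phi).
have encPi : injective encP.
  have encLi : injective (fun l => encS (map iR l)).
    by move=> l l' /encSi /(inj_map iRi).
  by move=> p q /encSi /(inj_map encLi).
pose code a : set T := [set h (e 0%N, encP phi) | phi in Sa a] `|`
  [set h (e 1%N, h (encP (ia a).1, h (e (ia a).2, e (na a))))].
apply: nle; apply: (@inj_le _ _ code) => a b eq.
have eS : Sa a = Sa b.
  apply: funext => phi; apply: propext; split => Sphi.
  - have : code a (h (e 0%N, encP phi)) by left; exists phi.
    rewrite eq => -[[phi' Sphi' /hi [/encPi ep]]|/hi [/ei]] //; by subst.
  - have : code b (h (e 0%N, encP phi)) by left; exists phi.
    rewrite -eq => -[[phi' Sphi' /hi [/encPi ep]]|/hi [/ei]] //; by subst.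
have : code b (h (e 1%N, h (encP (ia a).1, h (e (ia a).2, e (na a))))).
  by rewrite -eq; right.
case => [[phi _ /hi [/ei]] //|/hi [/hi [/encPi e1 /hi [/ei e2 /ei e3]]]].
have eia : ia a = ia b by move: e1 e2; case: (ia a) => ? ?; case: (ia b) => ? ? /= -> ->.
have Ea : E (Sa a) (ia a) a := iaP a.
have Eb : E (Sa a) (ia a) b by rewrite eS eia; exact: iaP b.
apply: (fEP (Sa a) (ia a)); try exact: mem_set.
by move: e3; rewrite /na eS eia.
Qed.

End Final.

End Part3.
Import Part3.

Unset Implicit Arguments.

Theorem proposition5 (R : pzRingType) (A : Type) (M : A -> lmodType R) :
  card_lt [set: set R] [set: A] ->
  card_lt [set: set nat] [set: A] ->
  (forall a : A, ~ alg_compact (M a)) ->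
  ~ alg_compact_quot (@dsum R A M).
Proof.
move=> [_ nR] [_ nN] nac.
have H a : exists S c, fin_sat S c /\ non_sat S c := onevar (nac a).
pose Sa a := proj1_sig (cid (H a)).
have Hc a : exists c, fin_sat (Sa a) c /\ non_sat (Sa a) c := proj2_sig (cid (H a)).
pose ca a := proj1_sig (cid (Hc a)).
have ok a : fin_sat (Sa a) (ca a) /\ non_sat (Sa a) (ca a) := proj2_sig (cid (Hc a)).
case: (pselect (finite_set [set: R])) => finR.
  have /countable_injP [f hf] := finite_set_countable finR.
  have fi : injective f by move=> x y; apply: hf; apply: mem_set.
  exact: (@final_gen R A M Sa ca ok nat f fi (card_lexx _) nN).
exact: (@final_gen R A M Sa ca ok R id (@inj_id _) (proj1 (infiniteP _) finR) nR).
Qed.
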